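(* The assignments $\Delta(E_i)=K_{\alpha_i}\otimes E_i+E_i\otimes K_{\alpha_i-\gamma_i}$, $\Delta(K_\lambda)=K_\lambda\otimes K_\lambda$, $\varepsilon(E_i)=0$, $\varepsilon(K_\lambda)=1$, $S(E_i)=-K_{-\alpha_i}E_iK_{\gamma_i-\alpha_i}$, $S(K_\lambda)=K_{-\lambda}$ ($i\in\mathbb{Z}$, $\lambda\in X$) extend to algebra homomorphisms $\Delta\colon U^+\to U^+\otimes U^+$, $\varepsilon\colon U^+\to\mathbb{Q}(q)$ and an algebra anti-homomorphism $S\colon U^+\to U^+$, and these endow $U^+$ with the structure of a Hopf algebra over $\mathbb{Q}(q)$.
   Context: $\mathbb{Q}(q)$ is the field of rational functions in $q$ over $\mathbb{Q}$; $[2]=q+q^{-1}$. For $i,j\in\mathbb{Z}$ put $b_{ij}=-2$ if $j\in\{i,i+1\}$ and $b_{ij}=4\,\mathrm{sgn}(j-i)(-1)^{j-i}$ otherwise. Let $\mathfrak{h}_{\mathbb{Z}}$ be the free $\mathbb{Z}$-module with basis $e_i$, $i\in\mathbb{Z}$, let $X=\mathrm{Hom}_{\mathbb{Z}}(\mathfrak{h}_{\mathbb{Z}},\mathbb{Z})$ (a group under pointwise addition) and $\langle\cdot,\cdot\rangle\colon X\times\mathfrak{h}_{\mathbb{Z}}\to\mathbb{Z}$ the evaluation. Put $\alpha_i^\vee=e_{i+1}-e_i$, let $\varepsilon_i\in X$ with $\langle\varepsilon_i,e_j\rangle=\delta_{ij}$, and $\alpha_i=\varepsilon_{i+1}-\varepsilon_i$.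 Define $\beta_i\in X$ by $\langle\beta_i,e_j\rangle=(-1)^i2$ if $j=i$, $\langle\beta_i,e_j\rangle=(-1)^i4$ if $j\ne i$ and $(-1)^jj>(-1)^ji$, and $\langle\beta_i,e_j\rangle=0$ otherwise; put $\gamma_i=-\beta_{i+1}$. The positive Borel part $U^+$ is the $\mathbb{Q}(q)$-algebra generated by $E_i$ ($i\in\mathbb{Z}$) and $K_\lambda$ ($\lambda\in X$) with relations $K_\lambda K_\mu=K_{\lambda+\mu}$, $K_0=1$, $K_\lambda E_i=q^{\langle\lambda,\alpha_i^\vee\rangle}E_iK_\lambda$, $E_iE_j=q^{b_{ij}}E_jE_i$ for $|i-j|>1$, $q^3E_i^2E_{i+1}-[2]E_iE_{i+1}E_i+q^{-3}E_{i+1}E_i^2=0$, $q^{-3}E_i^2E_{i-1}-[2]E_iE_{i-1}E_i+q^{3}E_{i-1}E_i^2=0$. *)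

(* Defs.v *)
From HB Require Import structures.
From mathcomp Require Import all_boot all_order all_algebra.
From mathcomp Require Import fraction.
Set Implicit Arguments. Unset Strict Implicit. Unset Printing Implicit Defensive.
Import Order.TTheory GRing.Theory Num.Theory.
Local Open Scope ring_scope.

Notation Qq := {fraction {poly rat}}.

Definition q : Qq := FracField.tofrac ('X : {poly rat}).

Definition q2 : Qq := q + q^-1.

Definition msign (k : int) : int := (-1) ^+ `|k|%N.

Definition bij (i j : int) : int :=
  if (j == i) || (j == i + 1) then -2
  else 4 * sgz (j - i) * msign (j - i).

(* X = Hom_Z(h_Z, Z) with h_Z free on e_i (i in Z): an element lambda of X
   is determined by its values lambda(e_j); we identify X with int -> int,
   <lambda, e_j> = lambda j, and the group law is pointwise addition. *)
Definition X := int -> int.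
Definition Xadd (l m : X) : X := fun j => l j + m j.
Definition Xopp (l : X) : X := fun j => - l j.
Definition Xzero : X := fun _ => 0.

(* <lambda, alpha_i^vee> with alpha_i^vee = e_{i+1} - e_i *)
Definition pair_coroot (l : X) (i : int) : int := l (i + 1) - l i.

Definition epsX (i : int) : X := fun j => if j == i then 1 else 0.
Definition alphaX (i : int) : X := Xadd (epsX (i + 1)) (Xopp (epsX i)).

Definition betaX (i : int) : X := fun j =>
  if j == i then msign i * 2
  else if msign j * i < msign j * j then msign i * 4
  else 0.
Definition gammaX (i : int) : X := Xopp (betaX (i + 1)).

Record Svs := SVS {
  vcar :> Type;
  veq : vcar -> vcar -> Prop;
  vadd : vcar -> vcar -> vcar;
  vscale : Qq -> vcar -> vcar;
  vzero : vcar }.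

(* Free algebra / presented algebra: terms modulo the least congruence *)
(* making them a unital associative Q(q)-algebra and imposing R.       *)

Inductive term (G : Type) : Type :=
  | tgen of G
  | tscal of Qq                 (* the scalar c * 1 *)
  | tadd of term G & term G
  | tmul of term G & term G.

Arguments tscal {G}.

Definition tsmul {G} (c : Qq) (t : term G) : term G := tmul (tscal c) t.

Inductive aeq (G : Type) (R : term G -> term G -> Prop)
  : term G -> term G -> Prop :=
  | aeq_rel t s : R t s -> aeq R t s
  | aeq_refl t : aeq R t t
  | aeq_sym t s : aeq R t s -> aeq R s t
  | aeq_trans t s u : aeq R t s -> aeq R s u -> aeq R t u
  | aeq_add t t' s s' : aeq R t t' -> aeq R s s' -> aeq R (tadd t s) (tadd t' s')
  | aeq_mul t t' s s' : aeq R t t' -> aeq R s s' -> aeq R (tmul t s) (tmul t' s')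
  | aeq_addA t s u : aeq R (tadd t (tadd s u)) (tadd (tadd t s) u)
  | aeq_addC t s : aeq R (tadd t s) (tadd s t)
  | aeq_add0 t : aeq R (tadd (tscal 0) t) t
  | aeq_addN t : aeq R (tadd t (tsmul (-1) t)) (tscal 0)
  | aeq_mulA t s u : aeq R (tmul t (tmul s u)) (tmul (tmul t s) u)
  | aeq_mul1l t : aeq R (tmul (tscal 1) t) t
  | aeq_mul1r t : aeq R (tmul t (tscal 1)) t
  | aeq_mulDl t s u : aeq R (tmul (tadd t s) u) (tadd (tmul t u) (tmul s u))
  | aeq_mulDr t s u : aeq R (tmul u (tadd t s)) (tadd (tmul u t) (tmul u s))
  | aeq_scalD a b : aeq R (tscal (a + b)) (tadd (tscal a) (tscal b))
  | aeq_scalM a b : aeq R (tscal (a * b)) (tmul (tscal a) (tscal b))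
  | aeq_scalC a t : aeq R (tmul (tscal a) t) (tmul t (tscal a)).

Inductive Ugen := gE of int | gK of X.

Notation Uterm := (term Ugen).
Definition E (i : int) : Uterm := tgen (gE i).
Definition K (l : X) : Uterm := tgen (gK l).

Inductive Urel : Uterm -> Uterm -> Prop :=
  | Urel_KK l m : Urel (tmul (K l) (K m)) (K (Xadd l m))
  | Urel_K0 : Urel (K Xzero) (tscal 1)
  | Urel_KE l i :
      Urel (tmul (K l) (E i)) (tsmul (q ^ pair_coroot l i) (tmul (E i) (K l)))
  | Urel_EE i j : (1 < `|i - j|)%N ->
      Urel (tmul (E i) (E j)) (tsmul (q ^ bij i j) (tmul (E j) (E i)))
  | Urel_Serre1 i :
      Urel (tadd (tadd
              (tsmul (q ^ 3) (tmul (tmul (E i) (E i)) (E (i + 1))))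
              (tsmul (- q2) (tmul (tmul (E i) (E (i + 1))) (E i))))
              (tsmul (q ^ (-3)) (tmul (tmul (E (i + 1)) (E i)) (E i))))
           (tscal 0)
  | Urel_Serre2 i :
      Urel (tadd (tadd
              (tsmul (q ^ (-3)) (tmul (tmul (E i) (E i)) (E (i - 1))))
              (tsmul (- q2) (tmul (tmul (E i) (E (i - 1))) (E i))))
              (tsmul (q ^ 3) (tmul (tmul (E (i - 1)) (E i)) (E i))))
           (tscal 0).

Definition Ueq : Uterm -> Uterm -> Prop := aeq Urel.

Definition Uvs : Svs := @SVS Uterm Ueq (@tadd Ugen) (@tsmul Ugen) (tscal 0).

(* Tensor product of setoid vector spaces: the free vector space on    *)
(* V x W modulo bilinearity (and compatibility with the equalities).   *)

Inductive tens (A B : Type) : Type :=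
  | tpure of A & B
  | tzero
  | tsum of tens A B & tens A B
  | tsc of Qq & tens A B.

Arguments tzero {A B}.

Inductive teq (V W : Svs) : tens V W -> tens V W -> Prop :=
  | teq_refl x : teq x x
  | teq_sym x y : teq x y -> teq y x
  | teq_trans x y z : teq x y -> teq y z -> teq x z
  | teq_sum x x' y y' : teq x x' -> teq y y' -> teq (tsum x y) (tsum x' y')
  | teq_sc c x x' : teq x x' -> teq (tsc c x) (tsc c x')
  | teq_sumA x y z : teq (tsum x (tsum y z)) (tsum (tsum x y) z)
  | teq_sumC x y : teq (tsum x y) (tsum y x)
  | teq_sum0 x : teq (tsum tzero x) x
  | teq_sumN x : teq (tsum x (tsc (-1) x)) tzero
  | teq_sc1 x : teq (tsc 1 x) x
  | teq_scM a b x : teq (tsc (a * b) x) (tsc a (tsc b x))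
  | teq_scDl a b x : teq (tsc (a + b) x) (tsum (tsc a x) (tsc b x))
  | teq_scDr a x y : teq (tsc a (tsum x y)) (tsum (tsc a x) (tsc a y))
  | teq_pure v v' w w' : veq v v' -> veq w w' -> teq (tpure v w) (tpure v' w')
  | teq_addl v v' w :
      teq (tpure (vadd v v') w) (tsum (tpure v w) (tpure v' w))
  | teq_addr v w w' :
      teq (tpure v (vadd w w')) (tsum (tpure v w) (tpure v w'))
  | teq_scl c v w : teq (tpure (vscale c v) w) (tsc c (tpure v w))
  | teq_scr c v w : teq (tpure v (vscale c w)) (tsc c (tpure v w)).

Definition tensor (V W : Svs) : Svs :=
  @SVS (tens V W) (@teq V W) (@tsum V W) (@tsc V W) tzero.

(* the linear map V (x) W -> C induced by a map f : V -> W -> C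
   (well defined when f is bilinear and compatible with equalities) *)
Fixpoint tlift (A B : Type) (C : Svs) (f : A -> B -> C) (x : tens A B) : C :=
  match x with
  | tpure a b => f a b
  | tzero => vzero C
  | tsum x1 x2 => vadd (tlift f x1) (tlift f x2)
  | tsc c x1 => vscale c (tlift f x1)
  end.

Fixpoint tmulP (A B : Type) (mA : A -> A -> A) (mB : B -> B -> B)
  (a : A) (b : B) (y : tens A B) : tens A B :=
  match y with
  | tpure a' b' => tpure (mA a a') (mB b b')
  | tzero => tzero
  | tsum y1 y2 => tsum (tmulP mA mB a b y1) (tmulP mA mB a b y2)
  | tsc c y1 => tsc c (tmulP mA mB a b y1)
  end.

Fixpoint tmulT (A B : Type) (mA : A -> A -> A) (mB : B -> B -> B)
  (x y : tens A B) : tens A B :=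
  match x with
  | tpure a b => tmulP mA mB a b y
  | tzero => tzero
  | tsum x1 x2 => tsum (tmulT mA mB x1 y) (tmulT mA mB x2 y)
  | tsc c x1 => tsc c (tmulT mA mB x1 y)
  end.

Notation UU := (tensor Uvs Uvs).

Definition Delta_gen (g : Ugen) : UU :=
  match g with
  | gE i => tsum (tpure (K (alphaX i)) (E i))
                 (tpure (E i) (K (Xadd (alphaX i) (Xopp (gammaX i)))))
  | gK l => tpure (K l) (K l)
  end.

Fixpoint Delta (t : Uterm) : UU :=
  match t with
  | tgen g => Delta_gen g
  | tscal c => tsc c (tpure (tscal 1) (tscal 1))
  | tadd t1 t2 => tsum (Delta t1) (Delta t2)
  | tmul t1 t2 => tmulT (@tmul Ugen) (@tmul Ugen) (Delta t1) (Delta t2)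
  end.

Definition eps_gen (g : Ugen) : Qq :=
  match g with gE _ => 0 | gK _ => 1 end.

Fixpoint eps (t : Uterm) : Qq :=
  match t with
  | tgen g => eps_gen g
  | tscal c => c
  | tadd t1 t2 => eps t1 + eps t2
  | tmul t1 t2 => eps t1 * eps t2
  end.

Definition S_gen (g : Ugen) : Uterm :=
  match g with
  | gE i => tsmul (-1) (tmul (tmul (K (Xopp (alphaX i))) (E i))
                              (K (Xadd (gammaX i) (Xopp (alphaX i)))))
  | gK l => K (Xopp l)
  end.

Fixpoint antipode (t : Uterm) : Uterm :=
  match t with
  | tgen g => S_gen g
  | tscal c => tscal c
  | tadd t1 t2 => tadd (antipode t1) (antipode t2)
  | tmul t1 t2 => tmul (antipode t2) (antipode t1)
  end.

Definition Delta_id (x : UU) : tensor UU Uvs :=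
  tlift (C := tensor UU Uvs) (fun a b => tpure (Delta a) b) x.
Definition id_Delta (x : UU) : tensor Uvs UU :=
  tlift (C := tensor Uvs UU) (fun a b => tpure a (Delta b)) x.

Definition tassoc (x : tensor UU Uvs) : tensor Uvs UU :=
  tlift (C := tensor Uvs UU)
    (fun y c => tlift (C := tensor Uvs UU) (fun a b => tpure a (tpure b c)) y) x.

(* (eps (x) id) and (id (x) eps) followed by Q(q) (x) U = U = U (x) Q(q) *)
Definition eps_id (x : UU) : Uterm := tlift (C := Uvs) (fun a b => tsmul (eps a) b) x.
Definition id_eps (x : UU) : Uterm := tlift (C := Uvs) (fun a b => tsmul (eps b) a) x.

Definition m_S_id (x : UU) : Uterm := tlift (C := Uvs) (fun a b => tmul (antipode a) b) x.
Definition m_id_S (x : UU) : Uterm := tlift (C := Uvs) (fun a b => tmul a (antipode b)) x.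

Definition UUeq : UU -> UU -> Prop := @teq Uvs Uvs.
Definition UUUeq : tensor Uvs UU -> tensor Uvs UU -> Prop := @teq Uvs UU.

(* Main.v *)
Require Import Defs.
From mathcomp Require Import all_boot all_order all_algebra.
From mathcomp Require Import fraction.
From mathcomp Require Import ring zify.
From Stdlib Require Import Setoid Morphisms FunctionalExtensionality.
Set Implicit Arguments. Unset Strict Implicit. Unset Printing Implicit Defensive.
Import Order.TTheory GRing.Theory Num.Theory.
Local Open Scope ring_scope.

#[global] Hint Extern 0 (aeq _ _ _) => reflexivity : core.
Section AeqLib.
Context {G : Type} (R : term G -> term G -> Prop).
Local Notation "a ~ b" := (aeq R a b) (at level 70).


#[global] Instance aeqE : Equivalence (aeq R).
Proof. split. exact: aeq_refl. exact: aeq_sym. exact: aeq_trans. Qed.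
#[global] Instance taddP : Proper (aeq R ==> aeq R ==> aeq R) (@tadd G).
Proof. move=> ? ? ? ? ? ?; exact: aeq_add. Qed.
#[global] Instance tmulP' : Proper (aeq R ==> aeq R ==> aeq R) (@tmul G).
Proof. move=> ? ? ? ? ? ?; exact: aeq_mul. Qed.
#[global] Instance tsmulP c : Proper (aeq R ==> aeq R) (@tsmul G c).
Proof. move=> ? ? H; rewrite /tsmul H; reflexivity. Qed.

Lemma a_addA (a b c : term G) : tadd a (tadd b c) ~ tadd (tadd a b) c.
Proof. exact: aeq_addA. Qed.
Lemma a_addC (a b : term G) : tadd a b ~ tadd b a.
Proof. exact: aeq_addC. Qed.
Lemma a_add0 (a : term G) : tadd (tscal 0) a ~ a.
Proof. exact: aeq_add0. Qed.
Lemma a_addr0 (a : term G) : tadd a (tscal 0) ~ a.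
Proof. by rewrite a_addC a_add0. Qed.
Lemma a_mulA (a b c : term G) : tmul a (tmul b c) ~ tmul (tmul a b) c.
Proof. exact: aeq_mulA. Qed.
Lemma a_mulDl (a b c : term G) : tmul (tadd a b) c ~ tadd (tmul a c) (tmul b c).
Proof. exact: aeq_mulDl. Qed.
Lemma a_mulDr (a b c : term G) : tmul c (tadd a b) ~ tadd (tmul c a) (tmul c b).
Proof. exact: aeq_mulDr. Qed.
Lemma a_mul1l (a : term G) : tmul (tscal 1) a ~ a.
Proof. exact: aeq_mul1l. Qed.
Lemma a_mul1r (a : term G) : tmul a (tscal 1) ~ a.
Proof. exact: aeq_mul1r. Qed.
Lemma a_scalC c (a : term G) : tmul (tscal c) a ~ tmul a (tscal c).
Proof. exact: aeq_scalC. Qed.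
Lemma a_scalM a b : tmul (tscal a) (tscal b) ~ (tscal (a * b) : term G).
Proof. symmetry; exact: aeq_scalM. Qed.
Lemma a_scalD a b : tadd (tscal a) (tscal b) ~ (tscal (a + b) : term G).
Proof. symmetry; exact: aeq_scalD. Qed.

Lemma sm1 (a : term G) : tsmul 1 a ~ a.
Proof. exact: a_mul1l. Qed.
Lemma smA x y (a : term G) : tsmul x (tsmul y a) ~ tsmul (x * y) a.
Proof. by rewrite /tsmul a_mulA a_scalM. Qed.
Lemma smD x y (a : term G) : tadd (tsmul x a) (tsmul y a) ~ tsmul (x + y) a.
Proof. by rewrite /tsmul -a_mulDl a_scalD. Qed.
Lemma smDr x (a b : term G) : tsmul x (tadd a b) ~ tadd (tsmul x a) (tsmul x b).
Proof. exact: a_mulDr. Qed.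
Lemma sm_mull x (a b : term G) : tmul (tsmul x a) b ~ tsmul x (tmul a b).
Proof. by rewrite /tsmul a_mulA. Qed.
Lemma sm_mulr x (a b : term G) : tmul a (tsmul x b) ~ tsmul x (tmul a b).
Proof. by rewrite /tsmul a_mulA -a_scalC -a_mulA. Qed.
Lemma sm_scal x y : tsmul x (tscal y) ~ (tscal (x * y) : term G).
Proof. exact: a_scalM. Qed.
Lemma a_scal_mull x (a : term G) : tmul (tscal x) a ~ tsmul x a.
Proof. reflexivity. Qed.
Lemma a_scal_mulr x (a : term G) : tmul a (tscal x) ~ tsmul x a.
Proof. by rewrite -a_scalC. Qed.

Lemma a_idem0 (a : term G) : tadd a a ~ a -> a ~ tscal 0.
Proof.
move=> H.
have: tadd (tadd a a) (tsmul (-1) a) ~ tscal 0 by rewrite H; exact: aeq_addN.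
by rewrite -a_addA aeq_addN a_addr0.
Qed.
Lemma sm0 (a : term G) : tsmul 0 a ~ tscal 0.
Proof. by apply: a_idem0; rewrite smD addr0. Qed.
Lemma sm_scal0 x : tsmul x (tscal 0) ~ (tscal 0 : term G).
Proof. by rewrite sm_scal mulr0. Qed.
Lemma a_mul0l (a : term G) : tmul (tscal 0) a ~ tscal 0.
Proof. exact: sm0. Qed.
Lemma a_mul0r (a : term G) : tmul a (tscal 0) ~ tscal 0.
Proof. by rewrite a_scal_mulr sm0. Qed.
Lemma smeq x y (a : term G) : x = y -> tsmul x a ~ tsmul y a.
Proof. by move=> ->. Qed.
Lemma a_addNl (a b : term G) : a ~ b -> tadd a (tsmul (-1) b) ~ tscal 0.
Proof. move=> ->; exact: aeq_addN. Qed.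
Lemma a_addACA (a b c d : term G) :
  tadd (tadd a b) (tadd c d) ~ tadd (tadd a c) (tadd b d).
Proof.
rewrite -!a_addA; apply: taddP; first reflexivity.
by rewrite !a_addA (a_addC b c).
Qed.
End AeqLib.

Lemma msignE k : msign k = (-1) ^ k.
Proof. by rewrite expN1r. Qed.
Lemma msignD a b : msign (a + b) = msign a * msign b.
Proof. by rewrite !msignE exprzDr // unitrN1. Qed.
Lemma msign1 : msign 1 = -1. Proof. by []. Qed.
Lemma msign_pm k : msign k = 1 \/ msign k = -1.
Proof. rewrite /msign; case: (odd `|k|%N) (ltac:(done) : True) => _; rewrite -signr_odd; case: odd; auto. Qed.
Lemma msignS k : msign (k + 1) = - msign k.
Proof. by rewrite msignD msign1 mulrN1. Qed.

Definition pc := pair_coroot.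
Lemma pcD l m i : pair_coroot (Xadd l m) i = pair_coroot l i + pair_coroot m i.
Proof. rewrite /pair_coroot /Xadd; lia. Qed.
Lemma pcN l i : pair_coroot (Xopp l) i = - pair_coroot l i.
Proof. rewrite /pair_coroot /Xopp; lia. Qed.
Lemma pc0 i : pair_coroot Xzero i = 0.
Proof. by rewrite /pair_coroot /Xzero subrr. Qed.

Lemma pc_alpha i j : pair_coroot (alphaX i) j =
  if j == i then 2 else if (j == i + 1) || (j == i - 1) then -1 else 0.
Proof.
rewrite /pair_coroot /alphaX /Xadd /Xopp /epsX.
repeat (case: ifP => ? /=); lia.
Qed.

Lemma ltsE s (a b : int) : s = 1 \/ s = -1 ->
  (s * a < s * b) = (if s == 1 then a < b else b < a).
Proof. by case=> ->; rewrite ?mul1r ?mulN1r ?ltrN2. Qed.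

Lemma msignN k : msign (- k) = msign k.
Proof. by rewrite !msignE -exprz_inv invrN invr1. Qed.

Lemma pc_beta n j : pair_coroot (betaX n) j =
  if j == n - 1 then -2 else if j == n then -2 else if j == n - 2 then 4
  else bij (n - 1) j.
Proof.
rewrite /pair_coroot /betaX /bij.
rewrite !(ltsE _ _ (msign_pm _)).
have e1 : j - (n - 1) = (j - n) + 1 by lia.
rewrite e1.
have -> : j = (j - n) + n by lia.
move: (j - n) => m.
rewrite !addrK !msignS !msignD /sgz.
have [->|h1] := eqVneq m (-1).
  case: (msign_pm n) => -> /=; repeat (case: ifP => ? /=); lia.
have [->|h2] := eqVneq m 0.
  case: (msign_pm n) => -> /=; repeat (case: ifP => ? /=); lia.
have [->|h3] := eqVneq m (-2).
  case: (msign_pm n) => -> /=; repeat (case: ifP => ? /=); lia.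
case: (msign_pm n) => ->; case: (msign_pm m) => -> /=;
repeat (case: ifP => ? /=); lia.
Qed.

Definition muX i := Xadd (alphaX i) (Xopp (gammaX i)).
Lemma pc_mu i j : pair_coroot (muX i) j =
  if j == i then 0 else if j == i + 1 then -3 else if j == i - 1 then 3
  else bij i j.
Proof.
rewrite /muX pcD pcN /gammaX pcN opprK pc_alpha pc_beta.
have -> : i + 1 - 1 = i by lia.
repeat (case: ifP => ? /=); lia.
Qed.

Lemma q_neq0 : q != 0.
Proof. by rewrite /q tofrac_eq0 polyX_eq0. Qed.
Lemma qD (a b : int) : q ^ (a + b) = q ^ a * q ^ b.
Proof. by rewrite expfzDr // q_neq0. Qed.
Lemma qN (a : int) : q ^ (- a) = (q ^ a)^-1.
Proof. by rewrite invr_expz. Qed.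
Lemma qK (a : int) : q ^ (- a) * q ^ a = 1.
Proof. by rewrite -qD addNr. Qed.
Lemma q0 : q ^ (0 : int) = 1. Proof. by []. Qed.

Local Notation "a ~ b" := (aeq Urel a b) (at level 70).

Lemma Xext (l m : X) : (forall j, l j = m j) -> l = m.
Proof. exact: functional_extensionality. Qed.
Lemma XaddC l m : Xadd l m = Xadd m l.
Proof. by apply: Xext => j; rewrite /Xadd addrC. Qed.

Lemma KK l m : tmul (K l) (K m) ~ K (Xadd l m).
Proof. by apply: aeq_rel; constructor. Qed.
Lemma KKC l m : tmul (K l) (K m) ~ tmul (K m) (K l).
Proof. by rewrite !KK XaddC. Qed.
Lemma K0 : K Xzero ~ tscal 1.
Proof. by apply: aeq_rel; constructor. Qed.
Lemma K0' l : (forall j, l j = 0) -> K l ~ tscal 1.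
Proof. by move=> h; rewrite (Xext (m := Xzero) h) K0. Qed.
Lemma KE l i : tmul (K l) (E i) ~ tsmul (q ^ pair_coroot l i) (tmul (E i) (K l)).
Proof. by apply: aeq_rel; constructor. Qed.
Lemma EK l i : tmul (E i) (K l) ~ tsmul (q ^ (- pair_coroot l i)) (tmul (K l) (E i)).
Proof. by rewrite KE smA qK sm1. Qed.
Lemma KKV l : tmul (K l) (K (Xopp l)) ~ tscal 1.
Proof. by rewrite KK; apply: K0' => j; rewrite /Xadd /Xopp subrr. Qed.
Lemma KVK l : tmul (K (Xopp l)) (K l) ~ tscal 1.
Proof. by rewrite KKC KKV. Qed.

#[global] Hint Extern 0 (teq _ _) => reflexivity : core.
Section TensLib.
Context {V W : Svs}.
Local Notation "a ~ b" := (@teq V W a b) (at level 70).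
#[global] Instance teqE : Equivalence (@teq V W).
Proof. split. exact: teq_refl. exact: teq_sym. exact: teq_trans. Qed.
#[global] Instance tsumP : Proper (@teq V W ==> @teq V W ==> @teq V W) (@tsum V W).
Proof. move=> ? ? ? ? ? ?; exact: teq_sum. Qed.
#[global] Instance tscP c : Proper (@teq V W ==> @teq V W) (@tsc V W c).
Proof. move=> ? ? ?; exact: teq_sc. Qed.

Implicit Types x y z : tens V W.
Lemma t_sumA x y z : tsum x (tsum y z) ~ tsum (tsum x y) z. Proof. exact: teq_sumA. Qed.
Lemma t_sumC x y : tsum x y ~ tsum y x. Proof. exact: teq_sumC. Qed.
Lemma t_sum0 x : tsum tzero x ~ x. Proof. exact: teq_sum0. Qed.
Lemma t_sumr0 x : tsum x tzero ~ x. Proof. by rewrite t_sumC t_sum0. Qed.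
Lemma t_sc1 x : tsc 1 x ~ x. Proof. exact: teq_sc1. Qed.
Lemma t_scM a b x : tsc a (tsc b x) ~ tsc (a * b) x. Proof. symmetry; exact: teq_scM. Qed.
Lemma t_scDl a b x : tsum (tsc a x) (tsc b x) ~ tsc (a + b) x. Proof. symmetry; exact: teq_scDl. Qed.
Lemma t_scDr a x y : tsc a (tsum x y) ~ tsum (tsc a x) (tsc a y). Proof. exact: teq_scDr. Qed.
Lemma t_idem0 x : tsum x x ~ x -> x ~ tzero.
Proof.
move=> H.
have: tsum (tsum x x) (tsc (-1) x) ~ tzero by rewrite H; exact: teq_sumN.
by rewrite -t_sumA teq_sumN t_sumr0.
Qed.
Lemma t_sc0 x : tsc 0 x ~ tzero.
Proof. by apply: t_idem0; rewrite t_scDl addr0. Qed.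
Lemma t_scz a : tsc a tzero ~ (tzero : tens V W).
Proof. by apply: t_idem0; rewrite -t_scDr t_sum0. Qed.
Lemma t_sumACA x y z u : tsum (tsum x y) (tsum z u) ~ tsum (tsum x z) (tsum y u).
Proof.
rewrite -!t_sumA; apply: tsumP; first reflexivity.
by rewrite !t_sumA (t_sumC y z).
Qed.
Lemma t_scC a b x : tsc a (tsc b x) ~ tsc b (tsc a x).
Proof. by rewrite !t_scM mulrC. Qed.
Lemma t_sceq a b x : a = b -> tsc a x ~ tsc b x. Proof. by move=> ->. Qed.
Lemma t_zz : tsum tzero tzero ~ (tzero : tens V W). Proof. exact: t_sum0. Qed.

Variables (mA : V -> V -> V) (mB : W -> W -> W).
Hypotheses (rV : forall v : V, veq v v) (rW : forall w : W, veq w w).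
Hypotheses (pA : forall a a' b b' : V, veq a a' -> veq b b' -> veq (mA a b) (mA a' b'))
           (pB : forall a a' b b' : W, veq a a' -> veq b b' -> veq (mB a b) (mB a' b')).
Hypotheses (dlA : forall a b c : V, veq (mA (vadd a b) c) (vadd (mA a c) (mA b c)))
           (drA : forall a b c : V, veq (mA c (vadd a b)) (vadd (mA c a) (mA c b)))
           (slA : forall k (a c : V), veq (mA (vscale k a) c) (vscale k (mA a c)))
           (srA : forall k (a c : V), veq (mA c (vscale k a)) (vscale k (mA c a))).
Hypotheses (dlB : forall a b c : W, veq (mB (vadd a b) c) (vadd (mB a c) (mB b c)))
           (drB : forall a b c : W, veq (mB c (vadd a b)) (vadd (mB c a) (mB c b)))
           (slB : forall k (a c : W), veq (mB (vscale k a) c) (vscale k (mB a c)))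
           (srB : forall k (a c : W), veq (mB c (vscale k a)) (vscale k (mB c a))).

Local Notation P := (tmulP mA mB).
Local Notation T := (tmulT mA mB).

Lemma tmulP_r a b y y' : y ~ y' -> P a b y ~ P a b y'.
Proof.
elim=> /=.
- by [].
- by move=> ? ? _ ?; symmetry.
- by move=> ? ? ? _ h1 _ h2; rewrite h1 h2.
- by move=> ? ? ? ? _ h1 _ h2; rewrite h1 h2.
- by move=> ? ? ? _ h1; rewrite h1.
- by move=> *; apply: teq_sumA.
- by move=> *; apply: teq_sumC.
- by move=> *; apply: teq_sum0.
- by move=> *; apply: teq_sumN.
- by move=> *; apply: teq_sc1.
- by move=> *; apply: teq_scM.
- by move=> *; apply: teq_scDl.
- by move=> *; apply: teq_scDr.
- by move=> *; apply: teq_pure; auto.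
- move=> v v' w; apply: teq_trans (teq_addl _ _ _); apply: teq_pure; auto.
- move=> v w w'; apply: teq_trans (teq_addr _ _ _); apply: teq_pure; auto.
- move=> c v w; apply: teq_trans (teq_scl _ _ _); apply: teq_pure; auto.
- move=> c v w; apply: teq_trans (teq_scr _ _ _); apply: teq_pure; auto.
Qed.
Lemma tmulP_l a a' b b' y : veq a a' -> veq b b' -> P a b y ~ P a' b' y.
Proof.
move=> ha hb; elim: y => [v w||y1 IH1 y2 IH2|c y IH] /=.
- by apply: teq_pure; auto.
- by [].
- by rewrite IH1 IH2.
- by rewrite IH.
Qed.

Lemma tmulP_addl v v' w y : P (vadd v v') w y ~ tsum (P v w y) (P v' w y).
Proof.
elim: y => [a b||y1 IH1 y2 IH2|c y IH] /=.
- apply: teq_trans (teq_addl _ _ _); apply: teq_pure; auto.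
- by rewrite t_sum0.
- by rewrite IH1 IH2 t_sumACA.
- by rewrite IH t_scDr.
Qed.
Lemma tmulP_addr v w w' y : P v (vadd w w') y ~ tsum (P v w y) (P v w' y).
Proof.
elim: y => [a b||y1 IH1 y2 IH2|c y IH] /=.
- apply: teq_trans (teq_addr _ _ _); apply: teq_pure; auto.
- by rewrite t_sum0.
- by rewrite IH1 IH2 t_sumACA.
- by rewrite IH t_scDr.
Qed.
Lemma tmulP_scl k v w y : P (vscale k v) w y ~ tsc k (P v w y).
Proof.
elim: y => [a b||y1 IH1 y2 IH2|c y IH] /=.
- apply: teq_trans (teq_scl _ _ _); apply: teq_pure; auto.
- by rewrite t_scz.
- by rewrite IH1 IH2 t_scDr.
- by rewrite IH t_scC.
Qed.
Lemma tmulP_scr k v w y : P v (vscale k w) y ~ tsc k (P v w y).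
Proof.
elim: y => [a b||y1 IH1 y2 IH2|c y IH] /=.
- apply: teq_trans (teq_scr _ _ _); apply: teq_pure; auto.
- by rewrite t_scz.
- by rewrite IH1 IH2 t_scDr.
- by rewrite IH t_scC.
Qed.

Lemma tmulT_l x x' y : x ~ x' -> T x y ~ T x' y.
Proof.
elim=> /=.
- by [].
- by move=> ? ? _ ?; symmetry.
- by move=> ? ? ? _ h1 _ h2; rewrite h1 h2.
- by move=> ? ? ? ? _ h1 _ h2; rewrite h1 h2.
- by move=> ? ? ? _ h1; rewrite h1.
- by move=> *; apply: teq_sumA.
- by move=> *; apply: teq_sumC.
- by move=> *; apply: teq_sum0.
- by move=> *; apply: teq_sumN.
- by move=> *; apply: teq_sc1.
- by move=> *; apply: teq_scM.
- by move=> *; apply: teq_scDl.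
- by move=> *; apply: teq_scDr.
- by move=> *; apply: tmulP_l.
- by move=> *; apply: tmulP_addl.
- by move=> *; apply: tmulP_addr.
- by move=> *; apply: tmulP_scl.
- by move=> *; apply: tmulP_scr.
Qed.

Lemma tmulT_r x y y' : y ~ y' -> T x y ~ T x y'.
Proof.
move=> h; elim: x => [a b||x1 IH1 x2 IH2|c x IH] /=.
- exact: tmulP_r.
- by [].
- by rewrite IH1 IH2.
- by rewrite IH.
Qed.

#[local] Instance tmulTP : Proper (@teq V W ==> @teq V W ==> @teq V W) T.
Proof. move=> x x' hx y y' hy; apply: teq_trans (tmulT_l _ hx) (tmulT_r _ hy). Qed.

Lemma tmulT_sumr x y z : T x (tsum y z) ~ tsum (T x y) (T x z).
Proof.
elim: x => [a b||x1 IH1 x2 IH2|c x IH] /=.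
- by [].
- by rewrite t_sum0.
- by rewrite IH1 IH2 t_sumACA.
- by rewrite IH t_scDr.
Qed.
Lemma tmulT_scr x k y : T x (tsc k y) ~ tsc k (T x y).
Proof.
elim: x => [a b||x1 IH1 x2 IH2|c x IH] /=.
- by [].
- by rewrite t_scz.
- by rewrite IH1 IH2 t_scDr.
- by rewrite IH t_scC.
Qed.
Lemma tmulT_zr x : T x tzero ~ tzero.
Proof.
elim: x => [a b||x1 IH1 x2 IH2|c x IH] /=.
- by [].
- by [].
- by rewrite IH1 IH2 t_sum0.
- by rewrite IH t_scz.
Qed.

Hypotheses (aA : forall a b c : V, veq (mA a (mA b c)) (mA (mA a b) c))
           (aB : forall a b c : W, veq (mB a (mB b c)) (mB (mB a b) c)).
Lemma tmulP_P a b c d z : P a b (P c d z) ~ P (mA a c) (mB b d) z.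
Proof.
elim: z => [u v||z1 IH1 z2 IH2|k z IH] /=.
- by apply: teq_pure.
- by [].
- by rewrite IH1 IH2.
- by rewrite IH.
Qed.
Lemma tmulT_A x y z : T x (T y z) ~ T (T x y) z.
Proof.
elim: x => [a b||x1 IH1 x2 IH2|c x IH] /=; last 3 first.
- by [].
- by rewrite IH1 IH2.
- by rewrite IH.
elim: y => [c d||y1 IH1 y2 IH2|k y IH] /=.
- exact: tmulP_P.
- by [].
- by rewrite IH1 IH2.
- by rewrite IH.
Qed.
End TensLib.

Typeclasses Transparent Uvs Ueq.
Notation mU := (@tmul Ugen).
Notation TU := (tmulT mU mU).
Notation PU := (tmulP mU mU).
Notation one := (tpure (tscal 1 : Uterm) (tscal 1 : Uterm) : UU).

Lemma U_refl (v : Uvs) : veq v v. Proof. exact: aeq_refl. Qed.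
Lemma U_p (a a' b b' : Uvs) : veq a a' -> veq b b' -> @veq Uvs (mU a b) (mU a' b').
Proof. exact: aeq_mul. Qed.
Lemma U_dl (a b c : Uvs) : @veq Uvs (mU (@vadd Uvs a b) c) (@vadd Uvs (mU a c) (mU b c)).
Proof. exact: aeq_mulDl. Qed.
Lemma U_dr (a b c : Uvs) : @veq Uvs (mU c (@vadd Uvs a b)) (@vadd Uvs (mU c a) (mU c b)).
Proof. exact: aeq_mulDr. Qed.
Lemma U_sl k (a c : Uvs) : @veq Uvs (mU (@vscale Uvs k a) c) (@vscale Uvs k (mU a c)).
Proof. exact: sm_mull. Qed.
Lemma U_sr k (a c : Uvs) : @veq Uvs (mU c (@vscale Uvs k a)) (@vscale Uvs k (mU c a)).
Proof. exact: sm_mulr. Qed.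
Lemma U_a (a b c : Uvs) : @veq Uvs (mU a (mU b c)) (mU (mU a b) c).
Proof. exact: aeq_mulA. Qed.
Create HintDb uhyp.
#[global] Hint Resolve U_refl U_p U_dl U_dr U_sl U_sr U_a : uhyp.

Local Notation "a ~ b" := (@teq Uvs Uvs a b) (at level 70).

#[global] Instance teqUE : @Equivalence (tens Uterm Uterm) (@teq Uvs Uvs).
Proof. split. exact: (@teq_refl Uvs Uvs). exact: (@teq_sym Uvs Uvs). exact: (@teq_trans Uvs Uvs). Qed.
#[global] Instance tsumUP : Proper (@teq Uvs Uvs ==> @teq Uvs Uvs ==> @teq Uvs Uvs) (@tsum Uterm Uterm).
Proof. move=> ? ? ? ? ? ?; exact: teq_sum. Qed.
#[global] Instance tscUP c : Proper (@teq Uvs Uvs ==> @teq Uvs Uvs) (@tsc Uterm Uterm c).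
Proof. move=> ? ? ?; exact: teq_sc. Qed.

Definition t_sumAU := @t_sumA Uvs Uvs.
Definition t_sumCU := @t_sumC Uvs Uvs.
Definition t_sum0U := @t_sum0 Uvs Uvs.
Definition t_sumr0U := @t_sumr0 Uvs Uvs.
Definition t_sc1U := @t_sc1 Uvs Uvs.
Definition t_scMU := @t_scM Uvs Uvs.
Definition t_scDlU := @t_scDl Uvs Uvs.
Definition t_scDrU := @t_scDr Uvs Uvs.
Definition t_idem0U := @t_idem0 Uvs Uvs.
Definition t_sc0U := @t_sc0 Uvs Uvs.
Definition t_sczU := @t_scz Uvs Uvs.
Definition t_sumACAU := @t_sumACA Uvs Uvs.
Definition t_scCU := @t_scC Uvs Uvs.
Definition t_sceqU := @t_sceq Uvs Uvs.
Definition t_zzU := @t_zz Uvs Uvs.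

Lemma TU_l (x x' y : UU) : x ~ x' -> TU x y ~ TU x' y.
Proof. by apply: tmulT_l; auto with uhyp. Qed.
Lemma TU_r (x y y' : UU) : y ~ y' -> TU x y ~ TU x y'.
Proof. by apply: tmulT_r; auto with uhyp. Qed.
#[global] Instance TUP : Proper (@teq Uvs Uvs ==> @teq Uvs Uvs ==> @teq Uvs Uvs) TU.
Proof. move=> x x' hx y y' hy; apply: (@teq_trans Uvs Uvs) (TU_l _ hx) (TU_r _ hy). Qed.
#[global] Instance tpureUP : Proper (aeq Urel ==> aeq Urel ==> @teq Uvs Uvs) (@tpure Uvs Uvs).
Proof. move=> ? ? ? ? ? ?; exact: teq_pure. Qed.
Lemma TU_sumr (x y z : UU) : TU x (tsum y z) ~ tsum (TU x y) (TU x z).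
Proof. exact: tmulT_sumr. Qed.
Lemma TU_scr (x : UU) k y : TU x (tsc k y) ~ tsc k (TU x y).
Proof. exact: tmulT_scr. Qed.
Lemma TU_A (x y z : UU) : TU x (TU y z) ~ TU (TU x y) z.
Proof. by apply: tmulT_A; auto with uhyp. Qed.
Lemma PU_one (x : UU) : PU (tscal 1) (tscal 1) x ~ x.
Proof.
elim: x => [a b||x1 IH1 x2 IH2|c x IH] /=.
- by apply: (@teq_pure Uvs Uvs); apply: a_mul1l.
- by [].
- by rewrite IH1 IH2.
- by rewrite IH.
Qed.
Lemma TU_one (x : UU) : TU x one ~ x.
Proof.
elim: x => [a b||x1 IH1 x2 IH2|c x IH] /=.
- by apply: (@teq_pure Uvs Uvs); apply: a_mul1r.
- by [].
- by rewrite IH1 IH2.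
- by rewrite IH.
Qed.

Fixpoint tevUU {G} (f : G -> UU) (t : term G) : UU :=
  match t with
  | tgen g => f g
  | tscal c => tsc c one
  | tadd a b => tsum (tevUU f a) (tevUU f b)
  | tmul a b => TU (tevUU f a) (tevUU f b)
  end.

Lemma Delta_tev t : Delta t = tevUU Delta_gen t.
Proof. by elim: t => //= a -> b ->. Qed.

Theorem tev_aeq G (R : term G -> term G -> Prop) (f : G -> UU) :
  (forall a b, R a b -> tevUU f a ~ tevUU f b) ->
  forall t s, aeq R t s -> tevUU f t ~ tevUU f s.
Proof.
move=> HR t s; elim=> /=.
- exact: HR.
- by [].
- by move=> ? ? _ ?; symmetry.
- by move=> ? ? ? _ h1 _ h2; rewrite h1 h2.
- by move=> ? ? ? ? _ h1 _ h2; rewrite h1 h2.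
- by move=> ? ? ? ? _ h1 _ h2; rewrite h1 h2.
- by move=> *; apply: t_sumAU.
- by move=> *; apply: t_sumCU.
- by move=> x; rewrite t_sc0U t_sum0U.
- by move=> x; rewrite PU_one t_sc0U; apply: (@teq_sumN Uvs Uvs).
- by move=> *; apply: TU_A.
- by move=> x; rewrite PU_one t_sc1U.
- by move=> x; rewrite TU_scr TU_one t_sc1U.
- by [].
- by move=> *; apply: TU_sumr.
- by move=> *; apply: (@teq_scDl Uvs Uvs).
- move=> a b; rewrite -t_scMU; apply: (@teq_sc Uvs Uvs); apply: (@teq_sc Uvs Uvs).
  by apply: (@teq_pure Uvs Uvs); rewrite a_mul1l.
- by move=> a x; rewrite PU_one TU_scr TU_one.
Qed.

Definition Ser {G} (c1 c2 c3 : Qq) (u v f : term G) : term G :=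
  tadd (tadd (tsmul c1 (tmul (tmul u v) f)) (tsmul c2 (tmul (tmul u f) v)))
       (tsmul c3 (tmul (tmul f u) v)).

Section SerreAbs.
Context {G : Type} (R : term G -> term G -> Prop).
Local Notation "a ~ b" := (aeq R a b) (at level 70).
Variables (c1 c2 c3 : Qq).
Local Notation S := (Ser c1 c2 c3).

Lemma sm_zero k (a : term G) : k = 0 -> tsmul k a ~ tscal 0.
Proof. by move=> ->; exact: sm0. Qed.

Lemma a_add3 (A A' B B' C C' : term G) :
  tadd (tadd (tadd A A') (tadd B B')) (tadd C C') ~
  tadd (tadd (tadd A B) C) (tadd (tadd A' B') C').
Proof. by rewrite (@a_addACA _ R A A' B B') (@a_addACA _ R (tadd A B) (tadd A' B') C C'). Qed.

Lemma comb1 a1 a2 a3 a4 a5 a6 (A B : term G) :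
  tadd (tadd (tadd (tsmul a1 A) (tsmul a2 A)) (tsmul a3 B))
       (tadd (tadd (tsmul a4 A) (tsmul a5 B)) (tsmul a6 B)) ~
  tadd (tsmul (a1 + a2 + a4) A) (tsmul (a3 + a5 + a6) B).
Proof.
rewrite (@smD _ R a1 a2 A) -(@a_addA _ R (tsmul a4 A)) (@smD _ R a5 a6 B) a_addACA !smD.
by apply: taddP; apply: smeq; ring.
Qed.
Lemma comb2 a1 a2 a3 a4 a5 a6 (A B : term G) :
  tadd (tadd (tadd (tsmul a1 A) (tsmul a2 B)) (tsmul a3 B))
       (tadd (tadd (tsmul a4 A) (tsmul a5 A)) (tsmul a6 B)) ~
  tadd (tsmul (a1 + (a4 + a5)) A) (tsmul (a2 + a3 + a6) B).
Proof.
rewrite -(@a_addA _ R (tsmul a1 A)) (@smD _ R a2 a3 B) (@smD _ R a4 a5 A) a_addACA !smD.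
by apply: taddP; apply: smeq; ring.
Qed.

Lemma Ser_addl u u' v f : S (tadd u u') v f ~ tadd (S u v f) (S u' v f).
Proof.
rewrite /Ser; repeat (rewrite a_mulDl || rewrite a_mulDr); rewrite !smDr; exact: a_add3.
Qed.
Lemma Ser_addm u v v' f : S u (tadd v v') f ~ tadd (S u v f) (S u v' f).
Proof.
rewrite /Ser; repeat (rewrite a_mulDl || rewrite a_mulDr); rewrite !smDr; exact: a_add3.
Qed.
Lemma Ser_addr u v f f' : S u v (tadd f f') ~ tadd (S u v f) (S u v f').
Proof.
rewrite /Ser; repeat (rewrite a_mulDl || rewrite a_mulDr); rewrite !smDr; exact: a_add3.
Qed.

Variables (x y z w : term G) (s1 s2 s3 : Qq).
Hypotheses (Hyx : tmul y x ~ tsmul s1 (tmul x y))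
           (Hyz : tmul y z ~ tsmul s2 (tmul z y))
           (Hwx : tmul w x ~ tsmul s3 (tmul x w))
           (HA : S x x z ~ tscal 0) (HB : S y y w ~ tscal 0).
Hypotheses (P1 : c1 + c2 * s3 + c3 * (s3 * s3) = 0)
           (P2 : c1 * (s2 * s2) + c2 * s2 + c3 = 0)
           (P3 : c1 * s2 + c2 + c1 * (s1 * s2) = 0)
           (P4 : c3 + c2 * (s1 * s2) + c3 * s1 = 0)
           (P5 : c1 + c1 * s1 + c2 * (s1 * s3) = 0)
           (P6 : c2 + c3 * s3 + c3 * (s1 * s3) = 0).

Lemma Sxxw : S x x w ~ tscal 0.
Proof.
rewrite /Ser.
have e2 : tmul (tmul x w) x ~ tsmul s3 (tmul (tmul x x) w).
  by rewrite -a_mulA Hwx sm_mulr a_mulA.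
have e3 : tmul (tmul w x) x ~ tsmul (s3 * s3) (tmul (tmul x x) w).
  by rewrite Hwx sm_mull e2 smA.
rewrite e2 e3 !smA !smD; apply: sm_zero; rewrite -P1; ring.
Qed.

Lemma Syyz : S y y z ~ tscal 0.
Proof.
rewrite /Ser.
have e2 : tmul (tmul y z) y ~ tsmul s2 (tmul (tmul z y) y).
  by rewrite Hyz sm_mull.
have e1 : tmul (tmul y y) z ~ tsmul (s2 * s2) (tmul (tmul z y) y).
  by rewrite -a_mulA Hyz sm_mulr a_mulA e2 smA.
rewrite e2 e1 !smA !smD; apply: sm_zero; rewrite -P2; ring.
Qed.

Lemma Sxyz : tadd (S x y z) (S y x z) ~ tscal 0.
Proof.
rewrite /Ser.
(* normal words: xzy and zxy *)
have e1 : tmul (tmul x y) z ~ tsmul s2 (tmul (tmul x z) y).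
  by rewrite -a_mulA Hyz sm_mulr a_mulA.
have e3 : tmul (tmul z x) y ~ tmul (tmul z x) y by [].
have e4 : tmul (tmul y x) z ~ tsmul (s1 * s2) (tmul (tmul x z) y).
  by rewrite Hyx sm_mull e1 smA.
have e5 : tmul (tmul y z) x ~ tsmul (s2 * s1) (tmul (tmul z x) y).
  by rewrite Hyz sm_mull -a_mulA Hyx sm_mulr a_mulA smA.
have e6 : tmul (tmul z y) x ~ tsmul s1 (tmul (tmul z x) y).
  by rewrite -a_mulA Hyx sm_mulr a_mulA.
rewrite e1 e4 e5 e6 !smA -/(tsmul c2 (tmul (tmul x z) y)) comb1.
rewrite (_ : c1 * s2 + c2 + c1 * (s1 * s2) = 0) // (_ : c3 + c2 * (s2 * s1) + c3 * s1 = 0).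
  by rewrite !sm0 a_add0.
by rewrite -P4; ring.
Qed.

Lemma Sxyw : tadd (S x y w) (S y x w) ~ tscal 0.
Proof.
rewrite /Ser.
have e3 : tmul (tmul w x) y ~ tsmul s3 (tmul (tmul x w) y).
  by rewrite Hwx sm_mull.
have e4 : tmul (tmul y x) w ~ tsmul s1 (tmul (tmul x y) w).
  by rewrite Hyx sm_mull.
have e5 : tmul (tmul y w) x ~ tsmul (s3 * s1) (tmul (tmul x y) w).
  by rewrite -a_mulA Hwx sm_mulr a_mulA e4 smA.
have e6 : tmul (tmul w y) x ~ tsmul (s1 * s3) (tmul (tmul x w) y).
  by rewrite -a_mulA Hyx sm_mulr a_mulA e3 smA.
rewrite e3 e4 e5 e6 !smA comb2.
rewrite (_ : c1 + (c1 * s1 + c2 * (s3 * s1)) = 0); last by rewrite -P5; ring.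
rewrite (_ : c2 + c3 * s3 + c3 * (s1 * s3) = 0) //.
by rewrite !sm0 a_add0.
Qed.

Lemma Ser_sum : S (tadd x y) (tadd x y) (tadd z w) ~ tscal 0.
Proof.
rewrite Ser_addl !Ser_addm !Ser_addr.
rewrite HA HB Sxxw Syyz !a_add0 !a_addr0.
rewrite a_addACA Sxyz Sxyw; exact: a_add0.
Qed.
End SerreAbs.

Local Notation "a ~ b" := (@teq Uvs Uvs a b) (at level 70).
Local Notation "a ~~ b" := (aeq Urel a b) (at level 70).

Lemma pU_addl (a a' b : Uterm) : tpure (tadd a a') b ~ tsum (tpure a b) (tpure a' b).
Proof. exact: (@teq_addl Uvs Uvs). Qed.
Lemma pU_addr (a b b' : Uterm) : tpure a (tadd b b') ~ tsum (tpure a b) (tpure a b').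
Proof. exact: (@teq_addr Uvs Uvs). Qed.
Lemma pU_scl c (a b : Uterm) : tpure (tsmul c a) b ~ tsc c (tpure a b).
Proof. exact: (@teq_scl Uvs Uvs). Qed.
Lemma pU_scr c (a b : Uterm) : tpure a (tsmul c b) ~ tsc c (tpure a b).
Proof. exact: (@teq_scr Uvs Uvs). Qed.
Lemma pU_0l (b : Uterm) : tpure (tscal 0) b ~ tzero.
Proof. by rewrite -(sm_scal0 Urel 0) pU_scl t_sc0U. Qed.
Lemma pU_0r (b : Uterm) : tpure b (tscal 0) ~ tzero.
Proof. by rewrite -(sm_scal0 Urel 0) pU_scr t_sc0U. Qed.

Lemma qsum (a b : int) x : tsc (q ^ a) (tsc (q ^ b) x) ~ tsc (q ^ (a + b)) x.
Proof. by rewrite t_scMU qD. Qed.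

Lemma BA u v : TU (tpure (E u) (K (muX u))) (tpure (K (alphaX v)) (E v)) ~
  tsc (q ^ (- pair_coroot (alphaX v) u + pair_coroot (muX u) v))
      (TU (tpure (K (alphaX v)) (E v)) (tpure (E u) (K (muX u)))).
Proof.
rewrite /= (EK (alphaX v) u) (KE (muX u) v) pU_scl pU_scr qsum; reflexivity.
Qed.

Lemma BA' u v : tpure (tmul (E u) (K (alphaX v))) (tmul (K (muX u)) (E v)) ~
  tsc (q ^ (- pair_coroot (alphaX v) u + pair_coroot (muX u) v))
      (tpure (tmul (K (alphaX v)) (E u)) (tmul (E v) (K (muX u)))).
Proof. exact: BA. Qed.

Lemma KKK a b c : tmul (tmul (K a) (K b)) (K c) ~~ K (Xadd (Xadd a b) c).
Proof. by rewrite !KK. Qed.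

Inductive g4 := gx | gy | gz | gw.
Section DSer.
Variables (c1 c2 c3 s1 s2 s3 : Qq).
Local Notation X := (tgen gx). Local Notation Y := (tgen gy).
Local Notation Z := (tgen gz). Local Notation W := (tgen gw).
Inductive R4 : term g4 -> term g4 -> Prop :=
  | r_yx : R4 (tmul Y X) (tsmul s1 (tmul X Y))
  | r_yz : R4 (tmul Y Z) (tsmul s2 (tmul Z Y))
  | r_wx : R4 (tmul W X) (tsmul s3 (tmul X W))
  | r_A : R4 (Ser c1 c2 c3 X X Z) (tscal 0)
  | r_B : R4 (Ser c1 c2 c3 Y Y W) (tscal 0).
Hypotheses (P1 : c1 + c2 * s3 + c3 * (s3 * s3) = 0)
           (P2 : c1 * (s2 * s2) + c2 * s2 + c3 = 0)
           (P3 : c1 * s2 + c2 + c1 * (s1 * s2) = 0)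
           (P4 : c3 + c2 * (s1 * s2) + c3 * s1 = 0)
           (P5 : c1 + c1 * s1 + c2 * (s1 * s3) = 0)
           (P6 : c2 + c3 * s3 + c3 * (s1 * s3) = 0).
Lemma R4_ser : aeq R4 (Ser c1 c2 c3 (tadd X Y) (tadd X Y) (tadd Z W)) (tscal 0).
Proof.
apply: Ser_sum P1 P2 P3 P4 P5 P6; apply: aeq_rel; constructor.
Qed.

Variables (i j : int).
Definition f4 (g : g4) : UU :=
  match g with
  | gx => tpure (K (alphaX i)) (E i)
  | gy => tpure (E i) (K (muX i))
  | gz => tpure (K (alphaX j)) (E j)
  | gw => tpure (E j) (K (muX j))
  end.
Hypotheses (SU : Ser c1 c2 c3 (E i) (E i) (E j) ~~ tscal 0)
  (e1 : s1 = q ^ (- pair_coroot (alphaX i) i + pair_coroot (muX i) i))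
  (e2 : s2 = q ^ (- pair_coroot (alphaX j) i + pair_coroot (muX i) j))
  (e3 : s3 = q ^ (- pair_coroot (alphaX i) j + pair_coroot (muX j) i)).

Lemma f4_R4 a b : R4 a b -> tevUU f4 a ~ tevUU f4 b.
Proof.
case=> /=.
- by rewrite BA' !a_mul1l e1.
- by rewrite BA' !a_mul1l e2.
- by rewrite BA' !a_mul1l e3.
- rewrite !a_mul1l !KKK.
  rewrite (_ : Xadd (Xadd (alphaX i) (alphaX j)) (alphaX i) = Xadd (Xadd (alphaX i) (alphaX i)) (alphaX j));
    last by apply: Xext => k; rewrite /Xadd; ring.
  rewrite (_ : Xadd (Xadd (alphaX j) (alphaX i)) (alphaX i) = Xadd (Xadd (alphaX i) (alphaX i)) (alphaX j));
    last by apply: Xext => k; rewrite /Xadd; ring.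
  rewrite t_sc0U -!pU_scr -!pU_addr.
  apply: (@teq_trans Uvs Uvs _ _ _ (@teq_pure Uvs Uvs _ _ _ _ (U_refl _) SU)); exact: pU_0r.
- rewrite !a_mul1l !KKK.
  rewrite (_ : Xadd (Xadd (muX i) (muX j)) (muX i) = Xadd (Xadd (muX i) (muX i)) (muX j));
    last by apply: Xext => k; rewrite /Xadd; ring.
  rewrite (_ : Xadd (Xadd (muX j) (muX i)) (muX i) = Xadd (Xadd (muX i) (muX i)) (muX j));
    last by apply: Xext => k; rewrite /Xadd; ring.
  rewrite t_sc0U -!pU_scl -!pU_addl.
  apply: (@teq_trans Uvs Uvs _ _ _ (@teq_pure Uvs Uvs _ _ _ _ SU (U_refl _))); exact: pU_0l.
Qed.

Lemma Delta_Ser : Delta (Ser c1 c2 c3 (E i) (E i) (E j)) ~ Delta (tscal 0).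
Proof.
rewrite !Delta_tev.
have -> : tevUU Delta_gen (Ser c1 c2 c3 (E i) (E i) (E j)) =
          tevUU f4 (Ser c1 c2 c3 (tadd X Y) (tadd X Y) (tadd Z W)) by [].
have -> : tevUU Delta_gen (tscal 0) = tevUU f4 (tscal 0) by [].
exact: (tev_aeq f4_R4 R4_ser).
Qed.
End DSer.

Local Notation "a ~ b" := (@teq Uvs Uvs a b) (at level 70).
Local Notation "a ~~ b" := (aeq Urel a b) (at level 70).

Lemma q3 : q ^ 3 = q ^+ 3. Proof. reflexivity. Qed.
Lemma q4 : q ^ 4 = q ^+ 4. Proof. reflexivity. Qed.
Lemma qm3 : q ^ (-3) = (q ^+ 3)^-1. Proof. by rewrite -exprnN. Qed.
Lemma qm2 : q ^ (-2) = (q ^+ 2)^-1. Proof. by rewrite -exprnN. Qed.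

Ltac pcsolve := rewrite ?pc_alpha ?pc_mu; repeat (case: ifP => ? /=); lia.

Lemma ser1_gen (F : fieldType) (x : F) : x != 0 ->
  let c1 := x ^+ 3 in let c2 := - (x + x^-1) in let c3 := (x ^+ 3)^-1 in
  let s1 := (x ^+ 2)^-1 in let s2 := (x ^+ 2)^-1 in let s3 := x ^+ 4 in
  (c1 + c2 * s3 + c3 * (s3 * s3) = 0) /\
  (c1 * (s2 * s2) + c2 * s2 + c3 = 0) /\
  (c1 * s2 + c2 + c1 * (s1 * s2) = 0) /\
  (c3 + c2 * (s1 * s2) + c3 * s1 = 0) /\
  (c1 + c1 * s1 + c2 * (s1 * s3) = 0) /\
  (c2 + c3 * s3 + c3 * (s1 * s3) = 0).
Proof. by move=> h /=; repeat split; field. Qed.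

Lemma ser2_gen (F : fieldType) (x : F) : x != 0 ->
  let c1 := (x ^+ 3)^-1 in let c2 := - (x + x^-1) in let c3 := x ^+ 3 in
  let s1 := (x ^+ 2)^-1 in let s2 := x ^+ 4 in let s3 := (x ^+ 2)^-1 in
  (c1 + c2 * s3 + c3 * (s3 * s3) = 0) /\
  (c1 * (s2 * s2) + c2 * s2 + c3 = 0) /\
  (c1 * s2 + c2 + c1 * (s1 * s2) = 0) /\
  (c3 + c2 * (s1 * s2) + c3 * s1 = 0) /\
  (c1 + c1 * s1 + c2 * (s1 * s3) = 0) /\
  (c2 + c3 * s3 + c3 * (s1 * s3) = 0).
Proof. by move=> h /=; repeat split; field. Qed.

Lemma Delta_Serre1 i :
  Delta (Ser (q ^ 3) (- q2) (q ^ (-3)) (E i) (E i) (E (i + 1))) ~ Delta (tscal 0).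
Proof.
have [P1 [P2 [P3 [P4 [P5 P6]]]]] := ser1_gen q_neq0.
rewrite -q3 -qm3 -qm2 -q4 in P1 P2 P3 P4 P5 P6.
apply: (Delta_Ser P1 P2 P3 P4 P5 P6).
- by apply: aeq_rel; exact: (Urel_Serre1 i).
- by congr (q ^ _); pcsolve.
- by congr (q ^ _); pcsolve.
- by congr (q ^ _); pcsolve.
Qed.

Lemma Delta_Serre2 i :
  Delta (Ser (q ^ (-3)) (- q2) (q ^ 3) (E i) (E i) (E (i - 1))) ~ Delta (tscal 0).
Proof.
have [P1 [P2 [P3 [P4 [P5 P6]]]]] := ser2_gen q_neq0.
rewrite -q3 -qm3 -qm2 -q4 in P1 P2 P3 P4 P5 P6.
apply: (Delta_Ser P1 P2 P3 P4 P5 P6).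
- by apply: aeq_rel; exact: (Urel_Serre2 i).
- by congr (q ^ _); pcsolve.
- by congr (q ^ _); pcsolve.
- by congr (q ^ _); pcsolve.
Qed.

Lemma bijN i j : (1 < `|i - j|)%N -> bij j i = - bij i j.
Proof.
move=> h; rewrite /bij.
have -> : (i == j) || (i == j + 1) = false by apply/negbTE; lia.
have -> : (j == i) || (j == i + 1) = false by apply/negbTE; lia.
rewrite -opprB msignN /sgz oppr_eq0 oppr_lt0.
case: ifP => _ /=; first by rewrite !mulr0 mul0r oppr0.
rewrite lt_neqAle eq_sym.
case: ifP => h1; case: ifP => h2 /=; first [lia | ring].
Qed.

Lemma Delta_EE i j : (1 < `|i - j|)%N ->
  Delta (tmul (E i) (E j)) ~ Delta (tsmul (q ^ bij i j) (tmul (E j) (E i))).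
Proof.
move=> h.
have hEE : tmul (E i) (E j) ~~ tsmul (q ^ bij i j) (tmul (E j) (E i)).
  by apply: aeq_rel; constructor.
rewrite /= !a_mul1l.
rewrite (KKC (alphaX i)) (KKC (muX i)) hEE.
rewrite (KE (alphaX i) j) (EK (muX j) i) (EK (alphaX j) i) (KE (muX i) j).
rewrite !pU_scl !pU_scr !qsum.
rewrite (_ : pair_coroot (alphaX i) j + - pair_coroot (muX j) i = bij i j); last first.
  rewrite pc_alpha pc_mu; repeat (case: ifP => ? /=); try lia.
  by rewrite (bijN h) sub0r opprK.
rewrite (_ : - pair_coroot (alphaX j) i + pair_coroot (muX i) j = bij i j); last first.
  rewrite pc_alpha pc_mu; repeat (case: ifP => ? /=); lia.
rewrite !t_scDrU t_sumACAU; reflexivity.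
Qed.

Lemma Delta_rel a b : Urel a b -> Delta a ~ Delta b.
Proof.
case.
- move=> l m /=; apply: (@teq_pure Uvs Uvs); exact: KK.
- rewrite /= t_sc1U; apply: (@teq_pure Uvs Uvs); exact: K0.
- move=> l i /=; rewrite !a_mul1l (KKC l (alphaX i)) (KKC l (muX i)) (KE l i).
  by rewrite pU_scl pU_scr t_scDrU.
- exact: Delta_EE.
- exact: Delta_Serre1.
- exact: Delta_Serre2.
Qed.

Theorem Delta_wd t s : Ueq t s -> Delta t ~ Delta s.
Proof.
move=> h; rewrite !Delta_tev; apply: (tev_aeq _ h) => a b hab.
rewrite -!Delta_tev; exact: Delta_rel.
Qed.

Local Notation "a ~~ b" := (aeq Urel a b) (at level 70).

Theorem eps_wd t s : Ueq t s -> eps t = eps s.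
Proof.
elim=> /=.
- move=> a b [] /=; intros;
    rewrite ?mul0r ?mulr0 ?mul1r ?mulr1 ?addr0 ?add0r //.
- by [].
- by move=> ? ? _ ->.
- by move=> ? ? ? _ -> _ ->.
- by move=> ? ? ? ? _ -> _ ->.
- by move=> ? ? ? ? _ -> _ ->.
- by move=> *; rewrite addrA.
- by move=> *; rewrite addrC.
- by move=> *; rewrite add0r.
- by move=> *; rewrite mulN1r subrr.
- by move=> *; rewrite mulrA.
- by move=> *; rewrite mul1r.
- by move=> *; rewrite mulr1.
- by move=> *; rewrite mulrDl.
- by move=> *; rewrite mulrDr.
- by [].
- by [].
- by move=> *; rewrite mulrC.
Qed.

Definition nuX x := Xadd (gammaX x) (Xopp (alphaX x)).
Definition rhoX x := Xadd (Xopp (alphaX x)) (nuX x).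
Definition dS x : Qq := - q ^ (- pair_coroot (nuX x) x).

Lemma SE x : antipode (E x) ~~ tsmul (dS x) (tmul (K (rhoX x)) (E x)).
Proof.
rewrite /= -a_mulA (EK (nuX x) x) sm_mulr a_mulA KK smA.
by apply: smeq; rewrite mulN1r.
Qed.

Lemma KE2 a x d (W : Uterm) :
  tmul (tmul (K a) (E x)) (tmul (K d) W) ~~
  tsmul (q ^ (- pair_coroot d x)) (tmul (K (Xadd a d)) (tmul (E x) W)).
Proof.
rewrite -(a_mulA _ (K a)) (a_mulA _ (E x) (K d) W) (EK d x) sm_mull sm_mulr.
by rewrite -(a_mulA _ (K d)) (a_mulA _ (K a)) KK.
Qed.

Lemma smKeq k1 k2 w1 w2 (W : Uterm) : k1 = k2 -> w1 = w2 ->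
  tsmul k1 (tmul (K w1) W) ~~ tsmul k2 (tmul (K w2) W).
Proof. by move=> -> ->. Qed.

Lemma S_mul a b : antipode (tmul a b) = tmul (antipode b) (antipode a). Proof. by []. Qed.
Lemma S_add a b : antipode (tadd a b) = tadd (antipode a) (antipode b). Proof. by []. Qed.
Lemma S_sm c a : antipode (tsmul c a) = tmul (antipode a) (tscal c). Proof. by []. Qed.
Lemma S_K l : antipode (K l) = K (Xopp l). Proof. by []. Qed.
Lemma S_scal c : antipode (tscal c) = (tscal c : Uterm). Proof. by []. Qed.

Lemma S_KE l i : antipode (tmul (K l) (E i)) ~~
   antipode (tsmul (q ^ pair_coroot l i) (tmul (E i) (K l))).
Proof.
rewrite S_sm !S_mul !S_K !SE.
rewrite sm_mull sm_mulr a_scal_mulr.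
rewrite -(a_mulA _ (K (rhoX i))) (EK (Xopp l) i) sm_mulr a_mulA.
rewrite a_mulA (KKC (Xopp l)) !smA; apply: smeq.
rewrite pcN opprK; ring.
Qed.

Lemma pc_rho x y : pair_coroot (rhoX x) y = - pair_coroot (muX x) y - pair_coroot (alphaX x) y.
Proof. rewrite /rhoX /nuX /muX; move: (alphaX x) (gammaX x) => a g; rewrite !pcD !pcN; lia. Qed.

Lemma S_EE i j : (1 < `|i - j|)%N -> antipode (tmul (E i) (E j)) ~~
   antipode (tsmul (q ^ bij i j) (tmul (E j) (E i))).
Proof.
move=> h.
have hEE : tmul (E i) (E j) ~~ tsmul (q ^ bij i j) (tmul (E j) (E i)).
  by apply: aeq_rel; constructor.
rewrite S_sm !S_mul !SE !sm_mull !sm_mulr a_scal_mulr !KE2 hEE sm_mulr !smA.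
apply: smKeq; last by rewrite XaddC.
have e1 : - pair_coroot (rhoX i) j = bij i j.
  rewrite pc_rho pc_alpha pc_mu; repeat (case: ifP => ? /=); lia.
have e2 : - pair_coroot (rhoX j) i = - bij i j.
  rewrite pc_rho pc_alpha pc_mu; repeat (case: ifP => ? /=); try lia.
  by rewrite (bijN h); lia.
rewrite e1 e2.
have e3 : q ^ bij i j = q ^ (- bij i j) * (q ^ bij i j * q ^ bij i j).
  by rewrite -!qD; congr (q ^ _); lia.
rewrite {1}e3; ring.
Qed.

Lemma comb_ser (c1 c2 c3 k1 k2 k3 kk : Qq) w1 w2 w3 (A B C : Uterm) :
  k1 = kk * c3 -> k2 = kk * c2 -> k3 = kk * c1 -> w2 = w1 -> w3 = w1 ->
  tadd (tadd (tsmul k1 (tmul (K w1) A)) (tsmul k2 (tmul (K w2) B))) (tsmul k3 (tmul (K w3) C))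
  ~~ tsmul kk (tmul (K w1) (tadd (tadd (tsmul c1 C) (tsmul c2 B)) (tsmul c3 A))).
Proof.
move=> -> -> -> -> ->; rewrite !a_mulDr !sm_mulr !smDr !smA !(mulrC kk).
rewrite (a_addC Urel (tadd _ _)) (a_addC Urel (tsmul (c3 * kk) _)) a_addA; reflexivity.
Qed.

Lemma rgA (R : comRingType) (c3 c1 di dj A B C D : R) :
  c3 * (A * B) = c1 * (C * D) -> c3 * di * di * dj * A * B = di * dj * di * C * D * c1.
Proof. move=> h; transitivity (di * di * dj * (c3 * (A * B))); [ring | rewrite h; ring]. Qed.
Lemma rgB (R : comRingType) (c1 c3 di dj A B C D : R) :
  c1 * (A * B) = c3 * (C * D) -> c1 * dj * di * di * A * B = di * dj * di * C * D * c3.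
Proof. move=> h; transitivity (di * di * dj * (c1 * (A * B))); [ring | rewrite h; ring]. Qed.
Lemma rgC (R : comRingType) (c2 di dj C D : R) :
  c2 * di * dj * di * C * D = di * dj * di * C * D * c2.
Proof. ring. Qed.

Section SSer.
Variables (c1 c2 c3 : Qq) (i j : int).
Let e1 := - pair_coroot (rhoX i) i + - pair_coroot (Xadd (rhoX i) (rhoX i)) j.
Let e2 := - pair_coroot (rhoX i) j + - pair_coroot (Xadd (rhoX j) (rhoX i)) i.
Let e3 := - pair_coroot (rhoX j) i + - pair_coroot (Xadd (rhoX i) (rhoX j)) i.
Hypotheses (H1 : c1 * q ^ e1 = c3 * q ^ e2) (H3 : c3 * q ^ e3 = c1 * q ^ e2)
  (SU : Ser c1 c2 c3 (E i) (E i) (E j) ~~ tscal 0).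
Lemma S_Ser_gen : antipode (Ser c1 c2 c3 (E i) (E i) (E j)) ~~ tscal 0.
Proof.
rewrite /Ser !S_add !S_sm !S_mul !a_scal_mulr !SE.
repeat (rewrite sm_mull || rewrite sm_mulr).
repeat rewrite KE2.
repeat (rewrite sm_mull || rewrite sm_mulr).
repeat rewrite KE2.
rewrite !smA.
set di := dS i; set dj := dS j.
rewrite (comb_ser (c1 := c1) (c2 := c2) (c3 := c3) (kk := di * dj * di * q ^ (- pair_coroot (rhoX i) j) *
           q ^ (- pair_coroot (Xadd (rhoX j) (rhoX i)) i))); first last.
- rewrite /Xadd; apply: functional_extensionality => k; ring.
- rewrite /Xadd; apply: functional_extensionality => k; ring.
- by apply: rgA; move: H3; rewrite /e3 /e2 !qD.
- exact: rgC.
- by apply: rgB; move: H1; rewrite /e1 /e2 !qD.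
rewrite (a_mulA _ (E i) (E i) (E j)) (a_mulA _ (E i) (E j) (E i)) (a_mulA _ (E j) (E i) (E i)).
have SU' := SU; rewrite /Ser in SU'.
rewrite SU' a_mul0r sm_scal0; reflexivity.
Qed.
End SSer.

Lemma pc_rho2 a b y : pair_coroot (Xadd (rhoX a) (rhoX b)) y = pair_coroot (rhoX a) y + pair_coroot (rhoX b) y.
Proof. exact: pcD. Qed.
Ltac pcsolve2 := rewrite ?pc_rho2 ?pc_rho ?pc_alpha ?pc_mu; repeat (case: ifP => ? /=); lia.

Lemma S_Serre1 i : antipode (Ser (q ^ 3) (- q2) (q ^ (-3)) (E i) (E i) (E (i + 1))) ~~ antipode (tscal 0).
Proof.
apply: S_Ser_gen.
- by rewrite -!qD; congr (q ^ _); pcsolve2.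
- by rewrite -!qD; congr (q ^ _); pcsolve2.
- by apply: aeq_rel; exact: (Urel_Serre1 i).
Qed.
Lemma S_Serre2 i : antipode (Ser (q ^ (-3)) (- q2) (q ^ 3) (E i) (E i) (E (i - 1))) ~~ antipode (tscal 0).
Proof.
apply: S_Ser_gen.
- by rewrite -!qD; congr (q ^ _); pcsolve2.
- by rewrite -!qD; congr (q ^ _); pcsolve2.
- by apply: aeq_rel; exact: (Urel_Serre2 i).
Qed.

Lemma S_rel a b : Urel a b -> antipode a ~~ antipode b.
Proof.
case.
- move=> l m; rewrite !S_mul !S_K KK.
  by rewrite (_ : Xadd (Xopp m) (Xopp l) = Xopp (Xadd l m)) //; apply: Xext => k; rewrite /Xadd /Xopp; ring.
- by rewrite S_K S_scal; apply: K0' => k; rewrite /Xopp /Xzero oppr0.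
- exact: S_KE.
- exact: S_EE.
- exact: S_Serre1.
- exact: S_Serre2.
Qed.

Theorem S_wd t s : Ueq t s -> antipode t ~~ antipode s.
Proof.
elim=> /=.
- exact: S_rel.
- by [].
- by move=> ? ? _ ?; symmetry.
- by move=> ? ? ? _ h1 _ h2; rewrite h1 h2.
- by move=> ? ? ? ? _ h1 _ h2; rewrite h1 h2.
- by move=> ? ? ? ? _ h1 _ h2; rewrite h1 h2.
- by move=> *; apply: a_addA.
- by move=> *; apply: a_addC.
- by move=> *; apply: a_add0.
- by move=> x; rewrite a_scal_mulr; apply: aeq_addN.
- by move=> *; symmetry; apply: a_mulA.
- by move=> *; apply: a_mul1r.
- by move=> *; apply: a_mul1l.
- by move=> *; apply: a_mulDr.
- by move=> *; apply: a_mulDl.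
- by move=> *; apply: aeq_scalD.
- by move=> a b; rewrite a_scalM mulrC.
- by move=> *; symmetry; apply: a_scalC.
Qed.

Notation T3 := (tensor Uvs UU).
Notation T3' := (tensor UU Uvs).
Notation M3 := (tmulT mU TU).
Notation M3' := (tmulT TU mU).
Local Notation "a ~3 b" := (@teq Uvs UU a b) (at level 70).

#[global] Instance teq3E : @Equivalence (tens Uterm (tens Uterm Uterm)) (@teq Uvs UU).
Proof. split. exact: (@teq_refl Uvs UU). exact: (@teq_sym Uvs UU). exact: (@teq_trans Uvs UU). Qed.
#[global] Instance tsum3P : Proper (@teq Uvs UU ==> @teq Uvs UU ==> @teq Uvs UU) (@tsum Uterm (tens Uterm Uterm)).
Proof. move=> ? ? ? ? ? ?; exact: (@teq_sum Uvs UU). Qed.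
#[global] Instance tsc3P c : Proper (@teq Uvs UU ==> @teq Uvs UU) (@tsc Uterm (tens Uterm Uterm) c).
Proof. move=> ? ? ?; exact: (@teq_sc Uvs UU). Qed.

Lemma UU_refl (v : UU) : veq v v. Proof. exact: (@teq_refl Uvs Uvs). Qed.
Lemma UU_p (a a' b b' : UU) : veq a a' -> veq b b' -> @veq UU (TU a b) (TU a' b').
Proof. by move=> h1 h2; apply: TUP. Qed.
Lemma UU_dl (a b c : UU) : @veq UU (TU (@vadd UU a b) c) (@vadd UU (TU a c) (TU b c)).
Proof. exact: (@teq_refl Uvs Uvs). Qed.
Lemma UU_dr (a b c : UU) : @veq UU (TU c (@vadd UU a b)) (@vadd UU (TU c a) (TU c b)).
Proof. exact: TU_sumr. Qed.
Lemma UU_sl k (a c : UU) : @veq UU (TU (@vscale UU k a) c) (@vscale UU k (TU a c)).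
Proof. exact: (@teq_refl Uvs Uvs). Qed.
Lemma UU_sr k (a c : UU) : @veq UU (TU c (@vscale UU k a)) (@vscale UU k (TU c a)).
Proof. exact: TU_scr. Qed.
#[global] Hint Resolve UU_refl UU_p UU_dl UU_dr UU_sl UU_sr : uhyp.

Lemma M3_l (x x' y : T3) : x ~3 x' -> M3 x y ~3 M3 x' y.
Proof. by apply: tmulT_l; auto with uhyp. Qed.
Lemma M3_r (x y y' : T3) : y ~3 y' -> M3 x y ~3 M3 x y'.
Proof. by apply: tmulT_r; auto with uhyp. Qed.

Lemma id_Delta_mul (x y : UU) : id_Delta (TU x y) = M3 (id_Delta x) (id_Delta y).
Proof.
elim: x => [a b||x1 IH1 x2 IH2|c x IH] /=; last 3 first.
- by [].
- by rewrite /id_Delta /= -/(id_Delta _) -/(id_Delta _) IH1 IH2.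
- by rewrite /id_Delta /= -/(id_Delta _) IH.
elim: y => [c d||y1 IH1 y2 IH2|k y IH] /=.
- by [].
- by [].
- by rewrite /id_Delta /= -/(id_Delta _) -/(id_Delta _) IH1 IH2.
- by rewrite /id_Delta /= -/(id_Delta _) IH.
Qed.

Lemma Delta_id_mul (x y : UU) : Delta_id (TU x y) = M3' (Delta_id x) (Delta_id y).
Proof.
elim: x => [a b||x1 IH1 x2 IH2|c x IH] /=; last 3 first.
- by [].
- by rewrite /Delta_id /= -/(Delta_id _) -/(Delta_id _) IH1 IH2.
- by rewrite /Delta_id /= -/(Delta_id _) IH.
elim: y => [c d||y1 IH1 y2 IH2|k y IH] /=.
- by [].
- by [].
- by rewrite /Delta_id /= -/(Delta_id _) -/(Delta_id _) IH1 IH2.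
- by rewrite /Delta_id /= -/(Delta_id _) IH.
Qed.

Definition gl (c : Uterm) : Uterm -> Uterm -> T3 := fun a b => tpure a (tpure b c).

Lemma tassoc_pure (y : UU) c : tassoc (tpure y c) = tlift (C := T3) (gl c) y.
Proof. by []. Qed.

Lemma tlift_mul (y y' : UU) c c' :
  tlift (C := T3) (gl (mU c c')) (TU y y') =
  M3 (tlift (C := T3) (gl c) y) (tlift (C := T3) (gl c') y').
Proof.
elim: y => [a b||y1 IH1 y2 IH2|k y IH] /=; last 3 first.
- by [].
- by rewrite IH1 IH2.
- by rewrite IH.
elim: y' => [a' b'||y1 IH1 y2 IH2|k y IH] /=.
- by [].
- by [].
- by rewrite IH1 IH2.
- by rewrite IH.
Qed.

Lemma tassoc_mul (X Y : T3') : tassoc (M3' X Y) ~3 M3 (tassoc X) (tassoc Y).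
Proof.
elim: X => [y c||X1 IH1 X2 IH2|k X IH]; last 3 first.
- by [].
- by rewrite /tassoc /= -!/(tassoc _) IH1 IH2.
- by rewrite /tassoc /= -!/(tassoc _) IH.
elim: Y => [y' c'||Y1 IH1 Y2 IH2|k Y IH].
- by rewrite /= !tassoc_pure tlift_mul.
- by rewrite /= (@tmulT_zr Uvs UU).
- rewrite /= /tassoc /= -!/(tassoc _) IH1 IH2.
  by rewrite (@tmulT_sumr Uvs UU).
- rewrite /= /tassoc /= -!/(tassoc _) IH.
  by rewrite (@tmulT_scr Uvs UU).
Qed.

Theorem coassoc t : tassoc (Delta_id (Delta t)) ~3 id_Delta (Delta t).
Proof.
elim: t => [g|c|a IHa b IHb|a IHa b IHb].
- case: g => [i|l] /=; last by [].
  rewrite /id_Delta /= (@teq_addr Uvs UU).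
  exact: (@teq_sumA Uvs UU).
- rewrite /id_Delta /tassoc /= (@teq_scr Uvs UU) (@teq_sc1 Uvs UU); reflexivity.
- exact: (@teq_sum Uvs UU _ _ _ _ IHa IHb).
- rewrite /= Delta_id_mul id_Delta_mul tassoc_mul.
  exact: (@teq_trans Uvs UU _ _ _ (M3_l _ IHa) (M3_r _ IHb)).
Qed.

Local Notation "a ~~ b" := (aeq Urel a b) (at level 70).
Notation tlU := (tlift (C := Uvs)).

Lemma TL_ext (f g : Uterm -> Uterm -> Uterm) (y : UU) :
  (forall c d, f c d ~~ g c d) -> tlU f y ~~ tlU g y.
Proof.
move=> h; elim: y => [c d||y1 IH1 y2 IH2|k y IH] /=.
- exact: h.
- by [].
- by rewrite IH1 IH2.
- by rewrite IH.
Qed.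
Lemma TL_add (f g : Uterm -> Uterm -> Uterm) (y : UU) :
  tlU (fun c d => tadd (f c d) (g c d)) y ~~ tadd (tlU f y) (tlU g y).
Proof.
elim: y => [c d||y1 IH1 y2 IH2|k y IH] /=.
- by [].
- by rewrite a_add0.
- by rewrite IH1 IH2 a_addACA.
- by rewrite IH smDr.
Qed.
Lemma TL_sm (f : Uterm -> Uterm -> Uterm) k (y : UU) :
  tlU (fun c d => tsmul k (f c d)) y ~~ tsmul k (tlU f y).
Proof.
elim: y => [c d||y1 IH1 y2 IH2|k' y IH] /=.
- by [].
- by rewrite sm_scal0.
- by rewrite IH1 IH2 smDr.
- by rewrite IH !smA mulrC.
Qed.
Lemma TL_0 (y : UU) : tlU (fun _ _ => tscal 0) y ~~ tscal 0.
Proof.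
elim: y => [c d||y1 IH1 y2 IH2|k y IH] /=.
- by [].
- by [].
- by rewrite IH1 IH2 a_add0.
- by rewrite IH sm_scal0.
Qed.

Lemma eps_id_mul (x y : UU) : eps_id (TU x y) ~~ tmul (eps_id x) (eps_id y).
Proof.
elim: x => [a b||x1 IH1 x2 IH2|k x IH]; last 3 first.
- by rewrite /eps_id /= a_mul0l.
- by rewrite /eps_id /= -!/(eps_id _) IH1 IH2 a_mulDl.
- by rewrite /eps_id /= -!/(eps_id _) IH sm_mull.
elim: y => [c d||y1 IH1 y2 IH2|k y IH].
- by rewrite /eps_id /= sm_mull sm_mulr smA.
- by rewrite /eps_id /= a_mul0r.
- by rewrite /eps_id /= -!/(eps_id _) IH1 IH2 a_mulDr.
- by rewrite /eps_id /= -!/(eps_id _) IH sm_mulr.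
Qed.
Lemma id_eps_mul (x y : UU) : id_eps (TU x y) ~~ tmul (id_eps x) (id_eps y).
Proof.
elim: x => [a b||x1 IH1 x2 IH2|k x IH]; last 3 first.
- by rewrite /id_eps /= a_mul0l.
- by rewrite /id_eps /= -!/(id_eps _) IH1 IH2 a_mulDl.
- by rewrite /id_eps /= -!/(id_eps _) IH sm_mull.
elim: y => [c d||y1 IH1 y2 IH2|k y IH].
- by rewrite /id_eps /= sm_mull sm_mulr smA mulrC.
- by rewrite /id_eps /= a_mul0r.
- by rewrite /id_eps /= -!/(id_eps _) IH1 IH2 a_mulDr.
- by rewrite /id_eps /= -!/(id_eps _) IH sm_mulr.
Qed.

Theorem counit t : eps_id (Delta t) ~~ t /\ id_eps (Delta t) ~~ t.
Proof.
elim: t => [g|c|a [IHa IHa'] b [IHb IHb']|a [IHa IHa'] b [IHb IHb']].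
- case: g => [i|l]; rewrite /eps_id /id_eps /=.
  + by rewrite !sm1 !sm0 a_addr0 a_add0.
  + by rewrite !sm1.
- by rewrite /eps_id /id_eps /= !sm1 !sm_scal !mulr1.
- by rewrite /eps_id /id_eps /= -!/(eps_id _) -!/(id_eps _) IHa IHb IHa' IHb'.
- by rewrite /= eps_id_mul id_eps_mul IHa IHb IHa' IHb'.
Qed.

Definition hS (u : Uterm) : Uterm -> Uterm -> Uterm :=
  fun c d => tmul (tmul (antipode c) u) d.

Lemma hS_ext u u' (y : UU) : u ~~ u' -> tlU (hS u) y ~~ tlU (hS u') y.
Proof. by move=> h; apply: TL_ext => c d; rewrite /hS h. Qed.
Lemma hS_add u1 u2 (y : UU) : tlU (hS (tadd u1 u2)) y ~~ tadd (tlU (hS u1) y) (tlU (hS u2) y).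
Proof.
rewrite -TL_add; apply: TL_ext => c d; rewrite /hS.
by rewrite a_mulDr a_mulDl.
Qed.
Lemma hS_sm k u (y : UU) : tlU (hS (tsmul k u)) y ~~ tsmul k (tlU (hS u) y).
Proof.
rewrite -TL_sm; apply: TL_ext => c d; rewrite /hS.
by rewrite sm_mulr sm_mull.
Qed.
Lemma hS_0 (y : UU) : tlU (hS (tscal 0)) y ~~ tscal 0.
Proof.
transitivity (tlU (fun _ _ => tscal 0) y); last exact: TL_0.
apply: TL_ext => c d; rewrite /hS.
by rewrite a_mul0r a_mul0l.
Qed.
Lemma hS_scal e (y : UU) : tlU (hS (tscal e)) y ~~ tsmul e (m_S_id y).
Proof.
rewrite /m_S_id -TL_sm; apply: TL_ext => c d; rewrite /hS.
by rewrite a_scal_mulr sm_mull.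
Qed.

Lemma mS_mul (x y : UU) : m_S_id (TU x y) ~~ tlU (hS (m_S_id x)) y.
Proof.
elim: x => [a b||x1 IH1 x2 IH2|k x IH]; last 3 first.
- by rewrite /m_S_id /= -/(m_S_id _) hS_0.
- by rewrite /m_S_id /= -!/(m_S_id _) IH1 IH2 hS_add.
- by rewrite /m_S_id /= -!/(m_S_id _) IH hS_sm.
elim: y => [c d||y1 IH1 y2 IH2|k y IH].
- rewrite /m_S_id /hS /= -!a_mulA; reflexivity.
- by [].
- by rewrite /m_S_id /= -!/(m_S_id _) IH1 IH2.
- by rewrite /m_S_id /= -!/(m_S_id _) IH.
Qed.

Definition hS' (u : Uterm) : Uterm -> Uterm -> Uterm :=
  fun a b => tmul (tmul a u) (antipode b).

Lemma mS'_mul (x y : UU) : m_id_S (TU x y) ~~ tlU (hS' (m_id_S y)) x.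
Proof.
elim: x => [a b||x1 IH1 x2 IH2|k x IH]; last 3 first.
- by [].
- by rewrite /m_id_S /= -!/(m_id_S _) IH1 IH2.
- by rewrite /m_id_S /= -!/(m_id_S _) IH.
rewrite /hS' /=.
elim: y => [c d||y1 IH1 y2 IH2|k y IH].
- rewrite /m_id_S /= -!a_mulA; reflexivity.
- by rewrite /m_id_S /= a_mul0r a_mul0l.
- by rewrite /m_id_S /= -!/(m_id_S _) IH1 IH2 a_mulDr a_mulDl.
- by rewrite /m_id_S /= -!/(m_id_S _) IH sm_mulr sm_mull.
Qed.

Lemma hS'_scal e (x : UU) : tlU (hS' (tscal e)) x ~~ tsmul e (m_id_S x).
Proof.
rewrite /m_id_S -TL_sm; apply: TL_ext => c d; rewrite /hS'.
by rewrite a_scal_mulr sm_mull.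
Qed.
Lemma hS'_ext u u' (x : UU) : u ~~ u' -> tlU (hS' u) x ~~ tlU (hS' u') x.
Proof. by move=> h; apply: TL_ext => c d; rewrite /hS' h. Qed.

Theorem antipode_ax t : m_S_id (Delta t) ~~ tscal (eps t) /\ m_id_S (Delta t) ~~ tscal (eps t).
Proof.
elim: t => [g|c|a [IHa IHa'] b [IHb IHb']|a [IHa IHa'] b [IHb IHb']].
- case: g => [i|l]; rewrite /m_S_id /m_id_S /=.
  + split.
    * have hK : tmul (K (Xadd (gammaX i) (Xopp (alphaX i)))) (K (Xadd (alphaX i) (Xopp (gammaX i)))) ~~ tscal 1.
        by rewrite KK; apply: K0' => k; rewrite /Xadd /Xopp; ring.
      rewrite sm_mull -(a_mulA _ (tmul (K _) (E i))) hK a_mul1r; exact: aeq_addN.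
    * rewrite sm_mulr !(a_mulA _ (K (alphaX i))) KKV a_mul1l.
      rewrite (_ : Xopp (Xadd (alphaX i) (Xopp (gammaX i))) = Xadd (gammaX i) (Xopp (alphaX i))); last first.
        by apply: Xext => k; rewrite /Xadd /Xopp; ring.
      rewrite a_addC; exact: aeq_addN.
  + by rewrite KVK KKV.
- by rewrite /m_S_id /m_id_S /= !a_mul1l sm_scal mulr1.
- by rewrite /m_S_id /m_id_S /= -!/(m_S_id _) -!/(m_id_S _) IHa IHb IHa' IHb' !a_scalD.
- split.
  + by rewrite /= mS_mul (hS_ext _ IHa) hS_scal IHb sm_scal.
  + by rewrite /= mS'_mul (hS'_ext _ IHb') hS'_scal IHa' sm_scal mulrC.
Qed.

Theorem mainTheorem6 :
  (* Delta, eps, S are well defined on U^+ (they respect all defining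
     relations), hence give an algebra homomorphism U^+ -> U^+ (x) U^+,
     an algebra homomorphism U^+ -> Q(q) and an anti-homomorphism U^+ -> U^+ *)
  (forall t s : Uterm, Ueq t s -> UUeq (Delta t) (Delta s)) /\
  (forall t s : Uterm, Ueq t s -> eps t = eps s) /\
  (forall t s : Uterm, Ueq t s -> Ueq (antipode t) (antipode s)) /\
  (* coassociativity *)
  (forall t : Uterm, UUUeq (tassoc (Delta_id (Delta t))) (id_Delta (Delta t))) /\
  (* counit *)
  (forall t : Uterm, Ueq (eps_id (Delta t)) t /\ Ueq (id_eps (Delta t)) t) /\
  (* antipode *)
  (forall t : Uterm, Ueq (m_S_id (Delta t)) (tscal (eps t)) /\
                     Ueq (m_id_S (Delta t)) (tscal (eps t))).
Proof.
split; first exact: Delta_wd.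
split; first exact: eps_wd.
split; first exact: S_wd.
split; first exact: coassoc.
split; first exact: counit.
exact: antipode_ax.
Qed.
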